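(* Consider the binary instrumental variable model described in the context, with both treatment and outcome possibly missing: $R^D\in\{0,1\}$ indicates that $D$ is observed and $R^Y\in\{0,1\}$ that $Y$ is observed, so the observed data are $(Z,R^D,R^D D,R^Y,R^Y Y)$. Assume the IV assumptions, that $R^D\perp\!\!\!\perp (U,D,Y)\mid Z$, and that $\mathbb{P}(R^D=1\mid Z=z)>0$ for $z=0,1$. Then: (1ZD$\oplus$2Z) If $R^Y\perp\!\!\!\perp (U,Y)\mid (Z,D,R^D)$ and $\mathbb{P}(R^Y=1\mid Z=z,D=d,R^D=1)>0$ for all $z$ and $d$, then the CACE is identifiable. (1UD$\oplus$2Z) If $R^Y\perp\!\!\!\perp (Z,Y)\mid (U,D,R^D)$ and $\mathbb{P}(R^Y=1\mid U=c,D=d,R^D=1)>0$ for $d=0,1$, then the CACE is identifiable. (1UY$\oplus$2Z) If $R^Y\perp\!\!\!\perp (Z,D)\mid (U,Y,R^D)$, $Y$ is binary, and $\mathbb{P}(R^Y=1\mid U=c,Y=y,R^D=1)>0$ for $y=0,1$, then the CACE is identifiable. (1DY$\oplus$2Z) If $R^Y\perp\!\!\!\perp (Z,U)\mid (D,Y,R^D)$, $Y$ is binary, noncompliance is two-sided, $\mathbb{P}(R^Y=1\mid D=d,Y=y,R^D=1)>0$ for all $d$ and $y$, and $Y\not\!\perp\!\!\!\perp Z\mid (D=d,R^D=1)$ for $d=0,1$, then the CACE is identifiable. (1ZY$\oplus$2Z) If $R^Y\perp\!\!\!\perp (U,D)\mid (Z,Y,R^D)$, $Y$ is binary, noncompliance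 is two-sided, $\mathbb{P}(R^Y=1\mid Z=z,Y=y,R^D=1)>0$ for all $z$ and $y$, and $Y\not\!\perp\!\!\!\perp D\mid Z=z$ for $z=0,1$, then the CACE is identifiable.
   Context: $Z\in\{0,1\}$ is a binary instrument, $D\in\{0,1\}$ the treatment received, $Y$ the outcome (real-valued; ''binary $Y$'' means $Y\in\{0,1\}$). Potential values $D(z),Y(z)$ for $z=0,1$ are defined with respect to the instrument; observed values are $D=ZD(1)+(1-Z)D(0)$ and $Y=ZY(1)+(1-Z)Y(0)$. The latent compliance status $U$ is $a$ (always-taker) if $D(1)=D(0)=1$, $c$ (complier) if $D(1)=1,D(0)=0$, $d$ (defier) if $D(1)=0,D(0)=1$, $n$ (never-taker) if $D(1)=D(0)=0$. IV assumptions: (1) $Z\perp\!\!\!\perp\{D(1),D(0),Y(1),Y(0)\}$; (2) $D(1)\ge D(0)$ for all units (no defiers); (3) $\mathbb{E}\{D(1)-D(0)\}\neq0$; (4) $Y(1)=Y(0)$ for units with $U\in\{a,n\}$. The complier average causal effect is $\mathrm{CACE}=\mathbb{E}\{Y(1)-Y(0)\mid U=c\}$. One-sided noncompliance means $D(0)=0$ for all units (only compliers and never-takers); two-sided noncompliance is the general case in which units in both arms may fail to comply (always-takers and never-takers may both be present). Independence statements refer to the joint distribution of $(Z,U,D,Y,R^D,R^Y)$. The CACE is identifiable if it is uniquely determined by the distribution of the observed data among all joint distributions satisfying the stated assumptions. *)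

(* Defs.v *)
From HB Require Import structures.
From mathcomp Require Import all_boot all_order all_algebra.
From mathcomp Require Import all_classical all_reals all_analysis.

Set Implicit Arguments.
Unset Strict Implicit.
Unset Printing Implicit Defensive.

Import Order.TTheory GRing.Theory Num.Theory.
Local Open Scope classical_set_scope.
Local Open Scope ring_scope.

Inductive status := Always | Complier | Defier | Never.

Definition status_of (d1 d0 : bool) : status :=
  match d1, d0 with
  | true, true => Always
  | true, false => Complier
  | false, true => Defier
  | false, false => Never
  end.

Definition status_enc (u : status) : bool * bool :=
  match u with
  | Always => (true, true) | Complier => (true, false)
  | Defier => (false, true) | Never => (false, false)
  end.
Definition status_dec (p : bool * bool) : status := status_of p.1 p.2.
Lemma status_encK : cancel status_enc status_dec. Proof. by case. Qed.

HB.instance Definition _ := Equality.copy status (can_type status_encK).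
HB.instance Definition _ := Choice.copy status (can_type status_encK).
HB.instance Definition _ := isPointed.Build status Never.
HB.instance Definition _ := @isMeasurable.Build default_measure_display
  status discrete_measurable discrete_measurable0
  discrete_measurableC discrete_measurableU.

Section Model.
Context {R : realType} {d : measure_display} {T : measurableType d}.

Record ivmodel := IVModel {
  Zv  : T -> bool;
  D1v : T -> bool;
  D0v : T -> bool;
  Y1v : T -> R;
  Y0v : T -> R;
  RDv : T -> bool;
  RYv : T -> bool
}.

Variable P : probability T R.
Variable M : ivmodel.

Definition Uv (x : T) : status := status_of (D1v M x) (D0v M x).
Definition Dv (x : T) : bool := if Zv M x then D1v M x else D0v M x.
Definition Yv (x : T) : R := if Zv M x then Y1v M x else Y0v M x.

Definition obs (x : T) : (bool * bool * bool * bool * R)%type :=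
  (Zv M x, RDv M x, RDv M x && Dv x, RYv M x, if RYv M x then Yv x else 0).


Definition indep {dA dB} {A : measurableType dA} {B : measurableType dB}
  (X : T -> A) (Y : T -> B) : Prop :=
  forall (SA : set A) (SB : set B), measurable SA -> measurable SB ->
    P (X @^-1` SA `&` Y @^-1` SB) = (P (X @^-1` SA) * P (Y @^-1` SB))%E.

(* X and Y conditionally independent given the (discrete) event C = k:
   P(X in SA, Y in SB, C = k) P(C = k) = P(X in SA, C = k) P(Y in SB, C = k),
   i.e. P(X,Y | C=k) = P(X | C=k) P(Y | C=k) whenever P(C = k) > 0. *)
Definition cindep_at {dA dB} {A : measurableType dA} {B : measurableType dB}
  {K : Type} (X : T -> A) (Y : T -> B) (C : T -> K) (k : K) : Prop :=
  forall (SA : set A) (SB : set B), measurable SA -> measurable SB ->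
    (P (X @^-1` SA `&` Y @^-1` SB `&` C @^-1` [set k]) * P (C @^-1` [set k]) =
     P (X @^-1` SA `&` C @^-1` [set k]) * P (Y @^-1` SB `&` C @^-1` [set k]))%E.

(* X independent of Y given C (C takes finitely many values in every use) *)
Definition cindep {dA dB} {A : measurableType dA} {B : measurableType dB}
  {K : Type} (X : T -> A) (Y : T -> B) (C : T -> K) : Prop :=
  forall k : K, cindep_at X Y C k.

Definition Pr (E : T -> Prop) : \bar R := P [set x | E x].

(* IV assumptions (1)-(4), plus measurability of the random variables and
   finite means of the potential outcomes (so that the CACE is defined). *)
Definition iv_assumptions : Prop :=
  (measurable_fun setT (Zv M) /\ measurable_fun setT (D1v M) /\
   measurable_fun setT (D0v M) /\ measurable_fun setT (Y1v M) /\
   measurable_fun setT (Y0v M) /\ measurable_fun setT (RDv M) /\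
   measurable_fun setT (RYv M)) /\
  P.-integrable setT (fun x => (Y1v M x)%:E) /\
  P.-integrable setT (fun x => (Y0v M x)%:E) /\
  indep (Zv M) (fun x => (D1v M x, D0v M x, Y1v M x, Y0v M x)) /\
  (forall x, D0v M x -> D1v M x) /\
  (\int[P]_x ((D1v M x)%:R - (D0v M x)%:R : R)%:E != 0)%E /\
  (forall x, Uv x = Always \/ Uv x = Never -> Y1v M x = Y0v M x).

Definition rd_assumptions : Prop :=
  cindep (RDv M) (fun x => (Uv x, Dv x, Yv x)) (Zv M) /\
  forall z : bool, (0 < Pr (fun x => RDv M x = true /\ Zv M x = z))%E.

Definition binaryY : Prop := forall x, Yv x = 0 \/ Yv x = 1.

Definition two_sided : Prop :=
  (0 < Pr (fun x => Uv x = Always))%E /\ (0 < Pr (fun x => Uv x = Never))%E.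

Definition case_ZD : Prop :=
  cindep (RYv M) (fun x => (Uv x, Yv x)) (fun x => (Zv M x, Dv x, RDv M x)) /\
  forall z dd : bool, (0 < Pr (fun x => [/\ RYv M x = true, Zv M x = z,
                                         Dv x = dd & RDv M x = true]))%E.

Definition case_UD : Prop :=
  cindep (RYv M) (fun x => (Zv M x, Yv x)) (fun x => (Uv x, Dv x, RDv M x)) /\
  forall dd : bool, (0 < Pr (fun x => [/\ RYv M x = true, Uv x = Complier,
                                       Dv x = dd & RDv M x = true]))%E.

Definition case_UY : Prop :=
  cindep (RYv M) (fun x => (Zv M x, Dv x)) (fun x => (Uv x, Yv x, RDv M x)) /\
  binaryY /\
  forall y : bool, (0 < Pr (fun x => [/\ RYv M x = true, Uv x = Complier,
                                      Yv x = y%:R & RDv M x = true]))%E.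

Definition case_DY : Prop :=
  cindep (RYv M) (fun x => (Zv M x, Uv x)) (fun x => (Dv x, Yv x, RDv M x)) /\
  binaryY /\ two_sided /\
  (forall (dd y : bool), (0 < Pr (fun x => [/\ RYv M x = true, Dv x = dd,
                                     Yv x = y%:R & RDv M x = true]))%E) /\
  forall dd : bool, ~ cindep_at Yv (Zv M) (fun x => (Dv x, RDv M x)) (dd, true).

Definition case_ZY : Prop :=
  cindep (RYv M) (fun x => (Uv x, Dv x)) (fun x => (Zv M x, Yv x, RDv M x)) /\
  binaryY /\ two_sided /\
  (forall (z y : bool), (0 < Pr (fun x => [/\ RYv M x = true, Zv M x = z,
                                     Yv x = y%:R & RDv M x = true]))%E) /\
  forall z : bool, ~ cindep_at Yv Dv (Zv M) z.

Definition cace : R :=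
  fine (\int[P]_(x in [set x | Uv x = Complier]) (Y1v M x - Y0v M x)%:E) /
  fine (P [set x | Uv x = Complier]).

End Model.

Arguments ivmodel : clear implicits.
Arguments ivmodel R {d} T.

Definition same_obs_law {R : realType}
  {d1} {T1 : measurableType d1} (P1 : probability T1 R) (M1 : ivmodel R T1)
  {d2} {T2 : measurableType d2} (P2 : probability T2 R) (M2 : ivmodel R T2) :=
  forall S : set (bool * bool * bool * bool * R)%type, measurable S ->
    P1 (obs M1 @^-1` S) = P2 (obs M2 @^-1` S).

(* The CACE is identifiable under the assumption class A: it is uniquely
   determined by the observed-data distribution among all joint
   distributions (realised on arbitrary probability spaces) satisfying A. *)
Definition cace_identifiable {R : realType}
  (A : forall d (T : measurableType d), probability T R -> ivmodel R T -> Prop) :=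
  forall d1 (T1 : measurableType d1) (P1 : probability T1 R) (M1 : ivmodel R T1)
         d2 (T2 : measurableType d2) (P2 : probability T2 R) (M2 : ivmodel R T2),
    A d1 T1 P1 M1 -> A d2 T2 P2 M2 -> same_obs_law P1 M1 P2 M2 ->
    cace P1 M1 = cace P2 M2.

(* Main.v *)
Require Import Defs.
From HB Require Import structures.
From mathcomp Require Import all_boot all_order all_algebra.
From mathcomp Require Import all_classical all_reals all_analysis.
From mathcomp Require Import ring lra.
Set Implicit Arguments.
Unset Strict Implicit.
Unset Printing Implicit Defensive.
Import Order.TTheory GRing.Theory Num.Theory.
Local Open Scope classical_set_scope.
Local Open Scope ring_scope.
Section Infra.
Context {R : realType} {d : measure_display} {T : measurableType d}.
Variable P : probability T R.

Definition pr (E : T -> Prop) : R := fine (P [set x | E x]).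
Definition mev (E : T -> Prop) := measurable [set x | E x].

Lemma pr_ext (E F : T -> Prop) : (forall x, E x <-> F x) -> pr E = pr F.
Proof.
move=> h; rewrite /pr; congr (fine (P _)); apply/seteqP; split=> x /= /h //.
Qed.

Lemma Pfin E : mev E -> P [set x | E x] = (pr E)%:E.
Proof. by move=> mE; rewrite /pr fineK //; apply: fin_num_measure. Qed.

Lemma pr_ge0 E : 0 <= pr E.
Proof. by rewrite /pr; apply: fine_ge0; apply: measure_ge0. Qed.

Lemma pr_le1 E : mev E -> pr E <= 1.
Proof. by move=> mE; rewrite -lee_fin -Pfin //; apply: probability_le1. Qed.

Lemma mev_T : mev (fun _ => True).
Proof. by rewrite /mev; exact: measurableT. Qed.

Lemma pr_T : pr (fun _ => True) = 1.
Proof. by rewrite /pr (_ : [set x | True] = setT) ?probability_setT. Qed.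

Lemma mev_and E F : mev E -> mev F -> mev (fun x => E x /\ F x).
Proof. by move=> mE mF; exact: measurableI mE mF. Qed.

Lemma mev_not E : mev E -> mev (fun x => ~ E x).
Proof. by move=> mE; exact: measurableC mE. Qed.

Lemma mev_or E F : mev E -> mev F -> mev (fun x => E x \/ F x).
Proof. by move=> mE mF; exact: measurableU mE mF. Qed.

Lemma mev_pre d' (U : measurableType d') (f : T -> U) (A : set U) :
  measurable_fun setT f -> measurable A -> mev (fun x => A (f x)).
Proof.
move=> mf mA; rewrite /mev -[X in measurable X]setTI; exact: mf.
Qed.

Lemma pr_disj E F : mev E -> mev F -> (forall x, E x -> F x -> False) ->
  pr (fun x => E x \/ F x) = pr E + pr F.
Proof.
move=> mE mF dj.
apply: EFin_inj; rewrite EFinD -!Pfin //; last exact: mev_or.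
rewrite -measureU //; apply/seteqP; split=> x //= [] /dj h /h //.
Qed.

Lemma pr_split E F : mev E -> mev F ->
  pr E = pr (fun x => E x /\ F x) + pr (fun x => E x /\ ~ F x).
Proof.
move=> mE mF; rewrite -pr_disj; last by move=> x [_ +] [].
- by apply: pr_ext => x; split; [case: (pselect (F x)) => h; tauto | tauto].
- exact: mev_and.
- exact/mev_and/mev_not.
Qed.

Lemma pr_mono E F : mev E -> mev F -> (forall x, E x -> F x) -> pr E <= pr F.
Proof.
move=> mE mF h; rewrite (pr_split mF mE) (@pr_ext E (fun x => F x /\ E x)).
  by rewrite lerDl pr_ge0.
by move=> x; split => [?|[]//]; split => //; exact: h.
Qed.

Lemma pr_False : pr (fun _ => False) = 0.
Proof. by rewrite /pr (_ : [set x | False] = set0) ?measure0. Qed.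

Lemma pr_empty E : (forall x, ~ E x) -> pr E = 0.
Proof. by move=> h; rewrite -pr_False; apply: pr_ext => x; split => // /h. Qed.


Lemma mev_ext E F : (forall x, E x <-> F x) -> mev F -> mev E.
Proof.
by move=> h; rewrite /mev (_ : [set x | E x] = [set x | F x]) //; apply/seteqP; split=> x /h.
Qed.

Lemma cind_use {dA dB} {A : measurableType dA} {B : measurableType dB} {K : Type}
  (X : T -> A) (Y : T -> B) (C : T -> K) k SA SB (E1 E2 E3 E4 : T -> Prop) :
  cindep_at P X Y C k -> measurable SA -> measurable SB ->
  (forall x, (SA (X x) /\ SB (Y x)) /\ C x = k <-> E1 x) ->
  (forall x, C x = k <-> E2 x) ->
  (forall x, SA (X x) /\ C x = k <-> E3 x) ->
  (forall x, SB (Y x) /\ C x = k <-> E4 x) ->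
  mev E1 -> mev E2 -> mev E3 -> mev E4 ->
  pr E1 * pr E2 = pr E3 * pr E4.
Proof.
move=> H mA mB h1 h2 h3 h4 m1 m2 m3 m4.
have := H SA SB mA mB.
have -> : X @^-1` SA `&` Y @^-1` SB `&` C @^-1` [set k] = [set x | E1 x].
  by apply/seteqP; split=> x /h1.
have -> : X @^-1` SA `&` C @^-1` [set k] = [set x | E3 x] by apply/seteqP; split=> x /h3.
have -> : Y @^-1` SB `&` C @^-1` [set k] = [set x | E4 x] by apply/seteqP; split=> x /h4.
have -> : C @^-1` [set k] = [set x | E2 x] by apply/seteqP; split=> x /h2.
by rewrite !Pfin // -!EFinM => -[].
Qed.

Lemma ind_use {dA dB} {A : measurableType dA} {B : measurableType dB}
  (X : T -> A) (Y : T -> B) SA SB (E1 E2 E3 : T -> Prop) :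
  indep P X Y -> measurable SA -> measurable SB ->
  (forall x, SA (X x) /\ SB (Y x) <-> E1 x) ->
  (forall x, SA (X x) <-> E2 x) ->
  (forall x, SB (Y x) <-> E3 x) ->
  mev E1 -> mev E2 -> mev E3 ->
  pr E1 = pr E2 * pr E3.
Proof.
move=> H mA mB h1 h2 h3 m1 m2 m3.
have := H SA SB mA mB.
have -> : X @^-1` SA `&` Y @^-1` SB = [set x | E1 x] by apply/seteqP; split=> x /h1.
have -> : X @^-1` SA = [set x | E2 x] by apply/seteqP; split=> x /h2.
have -> : Y @^-1` SB = [set x | E3 x] by apply/seteqP; split=> x /h3.
by rewrite !Pfin // -!EFinM => -[].
Qed.

End Infra.

Lemma pairE {A B : Type} (a c : A) (b e : B) : ((a, b) = (c, e)) = (a = c /\ b = e).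
Proof. by apply/propext; split => [[-> ->]|[-> ->]]. Qed.

Lemma mev_const {d} {T : measurableType d} (Q : Prop) : mev (T:=T) (fun _ => Q).
Proof.
rewrite /mev; case: (pselect Q) => q.
  by rewrite (_ : [set _ | Q] = setT) //; apply/seteqP; split.
by rewrite (_ : [set _ | Q] = set0) //; apply/seteqP; split.
Qed.

Lemma ratio_rel {R : realType} (V1 V0 W1 W0 N r l1 l0 G : R) :
  V1 * N = r * W1 -> V0 * N = r * W0 -> W1 = l1 * G -> W0 = l0 * G ->
  (N = 0 -> V1 = 0 /\ V0 = 0) -> V1 * l0 = V0 * l1.
Proof.
move=> h1 h0 e1 e0 hN; have [N0|N0] := eqVneq N 0.
  by have [-> ->] := hN N0; rewrite !mul0r.
apply: (mulIf N0); rewrite mulrAC h1 [V0 * _ * _]mulrAC h0 e1 e0; ring.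
Qed.

Lemma bool_neg (b : bool) : ~ (b = true) <-> b = false.
Proof. by case: b. Qed.

Lemma cramer {R : realType} (a00 a01 a10 a11 t0 t1 m0 m1 : R) :
  a00 * t0 + a01 * t1 = m0 -> a10 * t0 + a11 * t1 = m1 ->
  t1 * (a00 * a11 - a01 * a10) = a00 * m1 - a10 * m0.
Proof. by move=> <- <-; ring. Qed.

Lemma cramer0 {R : realType} (a00 a01 a10 a11 t0 t1 m0 m1 : R) :
  a00 * t0 + a01 * t1 = m0 -> a10 * t0 + a11 * t1 = m1 ->
  a00 * a11 - a01 * a10 = 0 -> a01 * m1 = a11 * m0.
Proof.
move=> <- <- h.
have -> : a01 * (a10 * t0 + a11 * t1) = a11 * (a00 * t0 + a01 * t1) - t0 * (a00 * a11 - a01 * a10) by ring.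
by rewrite h mulr0 subr0.
Qed.

Definition ind {R : realType} (Q : Prop) : R := if pselect Q then 1 else 0.

Lemma indM {R : realType} (Q1 Q2 : Prop) : ind (Q1 /\ Q2) = ind Q1 * ind Q2 :> R.
Proof.
rewrite /ind; case: (pselect Q1) => h1; case: (pselect Q2) => h2;
  case: (pselect (Q1 /\ Q2)) => h; rewrite ?mulr1 ?mulr0 ?mul0r //; exfalso; tauto.
Qed.

Section Bin.
Context {R : realType} {d : measure_display} {T : measurableType d}.
Variable P : probability T R.

Lemma pr_ind (E : T -> Prop) (Q : Prop) : pr P (fun x => E x /\ Q) = ind Q * pr P E.
Proof.
rewrite /ind; case: (pselect Q) => h; rewrite ?mul1r ?mul0r.
- by apply: pr_ext => x; tauto.
- by apply: pr_empty => x [].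
Qed.

Variable Y : T -> R.
Hypothesis binY : forall x, Y x = 0 \/ Y x = 1.
Hypothesis mY : measurable_fun setT Y.

Lemma mevYe (y : R) : mev (fun x => Y x = y).
Proof. exact: (mev_pre mY (measurable_set1 y)). Qed.

Lemma split_Y (E : T -> Prop) : mev E ->
  pr P E = pr P (fun x => E x /\ Y x = 0) + pr P (fun x => E x /\ Y x = 1).
Proof.
move=> mE; rewrite (pr_split P mE (mevYe 1)) addrC; congr (_ + _).
apply: pr_ext => x; split => -[h1 h2]; split => //.
- by case: (binY x) => // h; case: h2.
- by rewrite h2 => /eqP; rewrite eq_sym oner_eq0.
Qed.

Lemma bin_split (E : T -> Prop) (S : set R) : mev E -> measurable S ->
  pr P (fun x => E x /\ S (Y x)) =
  ind (S 1) * pr P (fun x => E x /\ Y x = 1) + ind (S 0) * (pr P E - pr P (fun x => E x /\ Y x = 1)).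
Proof.
move=> mE mS; rewrite [in RHS](split_Y mE) addrK.
rewrite (split_Y (E := fun x => E x /\ S (Y x))); last exact: mev_and mE (mev_pre mY mS).
rewrite addrC; congr (_ + _).
- rewrite -pr_ind; apply: pr_ext => x; split => -[[h1 h2] h3].
  + by rewrite h3 in h2; tauto.
  + by rewrite h2; tauto.
- rewrite -pr_ind; apply: pr_ext => x; split => -[[h1 h2] h3].
  + by rewrite h3 in h2; tauto.
  + by rewrite h2; tauto.
Qed.


Section Atoms.
Context {K : Type} (X : T -> bool) (C : T -> K) (k : K).
Hypotheses (mX : measurable_fun setT X) (mC : mev (fun x => C x = k)).
Let a b y := pr P (fun x => C x = k /\ X x = b /\ Y x = y).

Lemma mevXe b : mev (fun x => X x = b). Proof. exact: (mev_pre mX (A := [set b])). Qed.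

Lemma dec (Q : bool -> R -> Prop) : mev (fun x => Q (X x) (Y x) /\ C x = k) ->
  pr P (fun x => Q (X x) (Y x) /\ C x = k) =
  ind (Q false 0) * a false 0 + ind (Q false 1) * a false 1 +
  ind (Q true 0) * a true 0 + ind (Q true 1) * a true 1.
Proof.
move=> mF.
rewrite (pr_split P mF (mevXe true)).
rewrite (@pr_ext _ _ _ _ (fun x => _ /\ ~ X x = true) (fun x => (Q (X x) (Y x) /\ C x = k) /\ X x = false)); last first.
  by move=> x; rewrite bool_neg.
rewrite split_Y; last exact: mev_and mF (mevXe true).
rewrite (split_Y (E := fun x => (Q (X x) (Y x) /\ C x = k) /\ X x = false)); last exact: mev_and mF (mevXe false).
have e b y : pr P (fun x => ((Q (X x) (Y x) /\ C x = k) /\ X x = b) /\ Y x = y) = ind (Q b y) * a b y.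
  rewrite /a -pr_ind; apply: pr_ext => x; split.
  - by move=> [[[hq hc] hb] hy]; rewrite hb hy in hq; tauto.
  - by move=> [[hc [hb hy]] hq]; rewrite hb hy; tauto.
rewrite !e; ring.
Qed.

Lemma atoms_cindep : a false 0 * a true 1 = a false 1 * a true 0 -> cindep_at P Y X C k.
Proof.
move=> hdet SA SB mSA mSB.
have mYA : mev (fun x => SA (Y x)) by exact: mev_pre.
have mXB : mev (fun x => SB (X x)) by exact: mev_pre.
have -> : Y @^-1` SA `&` X @^-1` SB `&` C @^-1` [set k] = [set x | (fun b y => SA y /\ SB b) (X x) (Y x) /\ C x = k] by [].
have -> : Y @^-1` SA `&` C @^-1` [set k] = [set x | (fun (b : bool) y => SA y) (X x) (Y x) /\ C x = k] by [].
have -> : X @^-1` SB `&` C @^-1` [set k] = [set x | (fun b (y : R) => SB b) (X x) (Y x) /\ C x = k] by [].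
have -> : C @^-1` [set k] = [set x | (fun (b : bool) (y : R) => True) (X x) (Y x) /\ C x = k].
  by apply/seteqP; split => x /=; tauto.
rewrite !Pfin; try by [apply: mev_and => //; apply: mev_and | apply: mev_and => //; exact: mev_T].
rewrite (dec (Q := fun b y => SA y /\ SB b)); last by apply: mev_and => //; apply: mev_and.
rewrite (dec (Q := fun b y => True)); last by apply: mev_and => //; exact: mev_T.
rewrite (dec (Q := fun b y => SA y)); last by apply: mev_and.
rewrite (dec (Q := fun b y => SB b)); last by apply: mev_and.
rewrite -!EFinM; congr (_%:E).
rewrite !indM.
set iA0 := ind (SA 0); set iA1 := ind (SA 1); set iB0 := ind (SB false); set iB1 := ind (SB true).
have iT : ind True = 1 :> R by rewrite /ind; case: pselect.
rewrite iT; apply/eqP; rewrite -subr_eq0; apply/eqP.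
set a00 := a false 0; set a01 := a false 1; set a10 := a true 0; set a11 := a true 1.
have -> : (iA0 * iB0 * a00 + iA1 * iB0 * a01 + iA0 * iB1 * a10 + iA1 * iB1 * a11) *
    (1 * a00 + 1 * a01 + 1 * a10 + 1 * a11) -
    (iA0 * a00 + iA1 * a01 + iA0 * a10 + iA1 * a11) *
    (iB0 * a00 + iB0 * a01 + iB1 * a10 + iB1 * a11) =
    (a00 * a11 - a01 * a10) * ((iA0 - iA1) * (iB0 - iB1)) by ring.
by rewrite hdet subrr mul0r.
Qed.

End Atoms.
End Bin.

Lemma sys_solve {R : realType} (Wf0 Wf1 Wt0 Wt1 af0 af1 at0 at1 t0 t1 mf mt : R) :
  Wf0 = af0 * t0 -> Wf1 = af1 * t1 -> Wt0 = at0 * t0 -> Wt1 = at1 * t1 ->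
  Wf0 + Wf1 = mf -> Wt0 + Wt1 = mt -> (Wf0 * Wt1 = Wf1 * Wt0 -> False) ->
  Wf1 = af1 * ((af0 * mt - at0 * mf) / (af0 * at1 - af1 * at0)) /\
  Wt1 = at1 * ((af0 * mt - at0 * mf) / (af0 * at1 - af1 * at0)).
Proof.
move=> e1 e2 e3 e4 hf ht hW.
have hdet : af0 * at1 - af1 * at0 != 0.
  apply/eqP => h; apply: hW; rewrite e1 e2 e3 e4.
  have -> : af0 * t0 * (at1 * t1) = (af0 * at1 - af1 * at0) * (t0 * t1) + af1 * t1 * (at0 * t0) by ring.
  by rewrite h mul0r add0r.
have hc := @cramer R af0 af1 at0 at1 t0 t1 mf mt.
rewrite -e1 -e2 -e3 -e4 in hc; have {}hc := hc hf ht.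
by rewrite -hc mulfK // e2 e4.
Qed.

Section ODefs.
Context {R : realType}.
Definition o1 {d} {T : measurableType d} (P : probability T R) (M : ivmodel R T) z :=
  pr P (fun x => RDv M x = true /\ Zv M x = z).
Definition o2 {d} {T : measurableType d} (P : probability T R) (M : ivmodel R T) z dd :=
  pr P (fun x => RDv M x = true /\ Zv M x = z /\ Dv M x = dd).
Definition o3 {d} {T : measurableType d} (P : probability T R) (M : ivmodel R T) z dd S :=
  pr P (fun x => RDv M x = true /\ Zv M x = z /\ Dv M x = dd /\ RYv M x = true /\ S (Yv M x)).

Definition Vu {d} {T : measurableType d} (P : probability T R) (M : ivmodel R T) u z S :=
  pr P (fun x => RDv M x = true /\ Zv M x = z /\ (Uv M x = u /\ (RYv M x = true /\ S (Yv M x)))).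
Definition Wu {d} {T : measurableType d} (P : probability T R) (M : ivmodel R T) u z S :=
  pr P (fun x => RDv M x = true /\ Zv M x = z /\ (Uv M x = u /\ S (Yv M x))).
Definition ot (b : bool) := if b then Always else Never.
Definition dyterm {d} {T : measurableType d} (P : probability T R) (M : ivmodel R T) z dd :=
  o3 P M z dd [set 1] *
    ((o3 P M false dd [set 0] * o2 P M true dd - o3 P M true dd [set 0] * o2 P M false dd) /
     (o3 P M false dd [set 0] * o3 P M true dd [set 1] - o3 P M false dd [set 1] * o3 P M true dd [set 0])).
Definition zyterm {d} {T : measurableType d} (P : probability T R) (M : ivmodel R T) z dd :=
  o3 P M z dd [set 1] *
    ((o3 P M z false [set 0] * o2 P M z true - o3 P M z true [set 0] * o2 P M z false) /
     (o3 P M z false [set 0] * o3 P M z true [set 1] - o3 P M z false [set 1] * o3 P M z true [set 0])).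
Definition Aterm {d} {T : measurableType d} (P : probability T R) (M : ivmodel R T) z S :=
  o3 P M z z S - o3 P M (~~ z) z S * o1 P M z / o1 P M (~~ z).
Definition pcO {d} {T : measurableType d} (P : probability T R) (M : ivmodel R T) :=
  o2 P M true true / o1 P M true - o2 P M false true / o1 P M false.
Definition uyX {d} {T : measurableType d} (P : probability T R) (M : ivmodel R T) :=
  if Aterm P M false [set 0] * Aterm P M true [set 1] - Aterm P M false [set 1] * Aterm P M true [set 0] == 0
  then 0
  else (Aterm P M false [set 0] * (o1 P M true * pcO P M) - Aterm P M true [set 0] * (o1 P M false * pcO P M)) /
       (Aterm P M false [set 0] * Aterm P M true [set 1] - Aterm P M false [set 1] * Aterm P M true [set 0]) *
       (Aterm P M true [set 1] / o1 P M true - Aterm P M false [set 1] / o1 P M false).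
End ODefs.

Section Model.
Context {R : realType} {d : measure_display} {T : measurableType d}.
Variables (P : probability T R) (M : ivmodel R T).
Hypotheses (mZ : measurable_fun setT (Zv M)) (mD1 : measurable_fun setT (D1v M))
  (mD0 : measurable_fun setT (D0v M)) (mY1 : measurable_fun setT (Y1v M))
  (mY0 : measurable_fun setT (Y0v M)) (mRD : measurable_fun setT (RDv M))
  (mRY : measurable_fun setT (RYv M)).

Lemma mDv : measurable_fun setT (Dv M).
Proof. exact: measurable_fun_ifT. Qed.
Lemma mYv : measurable_fun setT (Yv M).
Proof. exact: measurable_fun_ifT. Qed.

Lemma U_iff x u : Uv M x = u <-> D1v M x = (status_enc u).1 /\ D0v M x = (status_enc u).2.
Proof. by rewrite /Uv; case: (D1v M x); case: (D0v M x); case: u; split=> //= -[]. Qed.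

Lemma mevZ b : mev (fun x => Zv M x = b). Proof. exact: (mev_pre mZ (A:=[set b])). Qed.
Lemma mevRD b : mev (fun x => RDv M x = b). Proof. exact: (mev_pre mRD (A:=[set b])). Qed.
Lemma mevRY b : mev (fun x => RYv M x = b). Proof. exact: (mev_pre mRY (A:=[set b])). Qed.
Lemma mevD1 b : mev (fun x => D1v M x = b). Proof. exact: (mev_pre mD1 (A:=[set b])). Qed.
Lemma mevD0 b : mev (fun x => D0v M x = b). Proof. exact: (mev_pre mD0 (A:=[set b])). Qed.
Lemma mevD b : mev (fun x => Dv M x = b). Proof. exact: (mev_pre mDv (A:=[set b])). Qed.
Lemma mevU u : mev (fun x => Uv M x = u).
Proof. apply: (mev_ext (fun x => U_iff x u)); apply: mev_and; [exact: mevD1|exact: mevD0]. Qed.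
Lemma mevY S : measurable S -> mev (fun x => S (Yv M x)). Proof. exact: mev_pre mYv. Qed.
Lemma mevY1 S : measurable S -> mev (fun x => S (Y1v M x)). Proof. exact: mev_pre mY1. Qed.
Lemma mevY0 S : measurable S -> mev (fun x => S (Y0v M x)). Proof. exact: mev_pre mY0. Qed.
Lemma mevYeq y : mev (fun x => Yv M x = y). Proof. exact: (mev_pre mYv (measurable_set1 y)). Qed.

Lemma mevUA (A : set status) : mev (fun x => A (Uv M x)).
Proof.
apply: (mev_ext (F := fun x => (A Always /\ Uv M x = Always) \/ (A Complier /\ Uv M x = Complier) \/
   (A Defier /\ Uv M x = Defier) \/ (A Never /\ Uv M x = Never))).
  move=> x; split; first by case: (Uv M x); tauto.
  by case=> [[? ->]|[[? ->]|[[? ->]|[? ->]]]].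
by repeat apply: mev_or; apply: mev_and; (exact: mev_const || exact: mevU).
Qed.

Lemma mUv : measurable_fun setT (Uv M).
Proof. by move=> _ A _; rewrite setTI; exact: mevUA. Qed.


Ltac mvt := repeat first [ apply: mev_and | apply: mev_or | apply: mev_not | exact: mev_T
  | exact: mevZ | exact: mevRD | exact: mevRY | exact: mevD | exact: mevD1 | exact: mevD0
  | exact: mevU | exact: mevYeq | (apply: mevY; assumption) | (apply: mevY1; assumption)
  | (apply: mevY0; assumption) | exact: mev_const ].


Hypotheses (iY1 : P.-integrable setT (fun x => (Y1v M x)%:E))
  (iY0 : P.-integrable setT (fun x => (Y0v M x)%:E))
  (Hind : indep P (Zv M) (fun x => (D1v M x, D0v M x, Y1v M x, Y0v M x)))
  (Hmono : forall x, D0v M x -> D1v M x)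
  (Hex : forall x, Uv M x = Always \/ Uv M x = Never -> Y1v M x = Y0v M x).

Lemma noDef x : Uv M x <> Defier.
Proof. rewrite /Uv; have := @Hmono x; by case: (D1v M x); case: (D0v M x) => // /(_ isT). Qed.

Lemma pc_eq : pr P (fun x => Uv M x = Complier) =
  pr P (fun x => D1v M x = true) - pr P (fun x => D0v M x = true).
Proof.
rewrite (pr_split P (mevD1 true) (mevD0 true)).
rewrite (@pr_ext _ _ _ _ (fun x => D1v M x = true /\ D0v M x = true) (fun x => D0v M x = true)).
  rewrite addrC addKr; apply: pr_ext => x; rewrite U_iff /= bool_neg; tauto.
move=> x; split => [[]//|h]; split => //; exact: Hmono.
Qed.

Lemma cace_eq : cace P M = (fine (\int[P]_x (Y1v M x)%:E) - fine (\int[P]_x (Y0v M x)%:E)) /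
   (pr P (fun x => D1v M x = true) - pr P (fun x => D0v M x = true)).
Proof.
rewrite /cace -pc_eq.
have -> : (\int[P]_(x in [set x | Uv M x = Complier]) (Y1v M x - Y0v M x)%:E =
   \int[P]_x (Y1v M x)%:E - \int[P]_x (Y0v M x)%:E)%E.
  rewrite integral_mkcond -integralB_EFin //.
  apply: eq_integral => x _; rewrite /patch; case: ifPn => //; rewrite notin_setE /= => h.
  rewrite Hex ?subee //.
  by move: h (@noDef x); case: (Uv M x); tauto.
by rewrite fineB ?integrable_fin_num.
Qed.


Lemma indZ z (SB : set (bool * bool * R * R)) (E : T -> Prop) : measurable SB ->
  (forall x, SB (D1v M x, D0v M x, Y1v M x, Y0v M x) <-> E x) -> mev E ->
  pr P (fun x => Zv M x = z /\ E x) = pr P (fun x => Zv M x = z) * pr P E.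
Proof.
move=> mSB h mE.
apply: (ind_use (SA := [set z]) (SB := SB) Hind) => //; try by mvt.
all: by move=> x; have := h x; rewrite /=; tauto.
Qed.

Hypotheses (Hrd : cindep P (RDv M) (fun x => (Uv M x, Dv M x, Yv M x)) (Zv M))
  (Hrdpos : forall z : bool, (0 < Pr P (fun x => RDv M x = true /\ Zv M x = z))%E).

Lemma rdZ z (SB : set (status * bool * R)) (E : T -> Prop) : measurable SB ->
  (forall x, SB (Uv M x, Dv M x, Yv M x) <-> E x) -> mev E ->
  pr P (fun x => RDv M x = true /\ Zv M x = z /\ E x) * pr P (fun x => Zv M x = z) =
  pr P (fun x => RDv M x = true /\ Zv M x = z) * pr P (fun x => Zv M x = z /\ E x).
Proof.
move=> mSB h mE.
apply: (cind_use (SA := [set true]) (SB := SB) (Hrd z)) => //; try by mvt.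
all: by move=> x; have := h x; rewrite /=; tauto.
Qed.

Lemma oZR_pos z : 0 < pr P (fun x => RDv M x = true /\ Zv M x = z).
Proof. by rewrite -lte_fin -Pfin; [exact: Hrdpos | mvt]. Qed.

Lemma pZ_pos z : 0 < pr P (fun x => Zv M x = z).
Proof.
apply: (lt_le_trans (oZR_pos z)); apply: pr_mono; try by mvt.
by move=> x [].
Qed.

Lemma condRD z (SB : set (status * bool * R)) (E : T -> Prop) : measurable SB ->
  (forall x, SB (Uv M x, Dv M x, Yv M x) <-> E x) -> mev E ->
  pr P (fun x => Zv M x = z /\ E x) / pr P (fun x => Zv M x = z) =
  pr P (fun x => RDv M x = true /\ Zv M x = z /\ E x) / pr P (fun x => RDv M x = true /\ Zv M x = z).
Proof.
move=> mSB h mE; have := rdZ z mSB h mE.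
have := pZ_pos z; have := oZR_pos z.
set a := pr P _; set b := pr P _; set c := pr P _; set e := pr P _ => ha hb H.
have hb0 : b != 0 by rewrite gt_eqF.
have ha0 : a != 0 by rewrite gt_eqF.
by apply/eqP; rewrite eqr_div // H mulrC.
Qed.


Lemma YzRD z S : measurable S ->
  pr P (fun x => S ((if z then Y1v M else Y0v M) x)) =
  pr P (fun x => RDv M x = true /\ Zv M x = z /\ S (Yv M x)) / pr P (fun x => RDv M x = true /\ Zv M x = z).
Proof.
move=> mS.
have E1 : pr P (fun x => Zv M x = z /\ S (Yv M x)) / pr P (fun x => Zv M x = z) =
  pr P (fun x => RDv M x = true /\ Zv M x = z /\ S (Yv M x)) / pr P (fun x => RDv M x = true /\ Zv M x = z).
  apply: (condRD z (SB := setT `*` S)).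
  - exact: measurableX.
  - by move=> x /=; split => // -[].
  - by mvt.
rewrite -E1.
have hb0 : pr P (fun x => Zv M x = z) != 0 by rewrite gt_eqF // pZ_pos.
apply: (mulIf hb0); rewrite divfK // mulrC.
have -> : pr P (fun x => Zv M x = z /\ S (Yv M x)) =
          pr P (fun x => Zv M x = z /\ S ((if z then Y1v M else Y0v M) x)).
  by apply: pr_ext => x; rewrite /Yv; case: z {E1 hb0} => /=; split => -[e]; rewrite e; tauto.
case: z {E1} hb0 => hb0.
  symmetry; apply: (indZ true (SB := (setT `*` setT `*` S) `*` setT)).
  + by apply: measurableX => //; apply: measurableX => //; apply: measurableX.
  + by move=> x /=; tauto.
  + by mvt.
- symmetry; apply: (indZ false (SB := (setT `*` setT `*` setT) `*` S)).
  + by apply: measurableX => //; apply: measurableX => //; apply: measurableX.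
  + by move=> x /=; tauto.
  + by mvt.
Qed.

Lemma DzRD z :
  pr P (fun x => (if z then D1v M else D0v M) x = true) =
  pr P (fun x => RDv M x = true /\ Zv M x = z /\ Dv M x = true) / pr P (fun x => RDv M x = true /\ Zv M x = z).
Proof.
have E1 : pr P (fun x => Zv M x = z /\ Dv M x = true) / pr P (fun x => Zv M x = z) =
  pr P (fun x => RDv M x = true /\ Zv M x = z /\ Dv M x = true) / pr P (fun x => RDv M x = true /\ Zv M x = z).
  apply: (condRD z (SB := (setT `*` [set true]) `*` setT)).
  - by apply: measurableX => //; apply: measurableX.
  - by move=> x /=; tauto.
  - by mvt.
rewrite -E1.
have hb0 : pr P (fun x => Zv M x = z) != 0 by rewrite gt_eqF // pZ_pos.
apply: (mulIf hb0); rewrite divfK // mulrC.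
have -> : pr P (fun x => Zv M x = z /\ Dv M x = true) =
          pr P (fun x => Zv M x = z /\ (if z then D1v M else D0v M) x = true).
  by apply: pr_ext => x; rewrite /Dv; case: z {E1 hb0} => /=; split => -[e]; rewrite e; tauto.
case: z {E1} hb0 => hb0.
- symmetry; apply: (indZ true (SB := ([set true] `*` setT `*` setT) `*` setT)).
  + by apply: measurableX => //; apply: measurableX => //; apply: measurableX.
  + by move=> x /=; tauto.
  + by mvt.
- symmetry; apply: (indZ false (SB := (setT `*` [set true] `*` setT) `*` setT)).
  + by apply: measurableX => //; apply: measurableX => //; apply: measurableX.
  + by move=> x /=; tauto.
  + by mvt.
Qed.

Lemma CzRD z S : measurable S ->
  pr P (fun x => Uv M x = Complier /\ S ((if z then Y1v M else Y0v M) x)) =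
  pr P (fun x => RDv M x = true /\ Zv M x = z /\ (Uv M x = Complier /\ S (Yv M x))) /
  pr P (fun x => RDv M x = true /\ Zv M x = z).
Proof.
move=> mS.
have E1 : pr P (fun x => Zv M x = z /\ (Uv M x = Complier /\ S (Yv M x))) / pr P (fun x => Zv M x = z) =
  pr P (fun x => RDv M x = true /\ Zv M x = z /\ (Uv M x = Complier /\ S (Yv M x))) /
  pr P (fun x => RDv M x = true /\ Zv M x = z).
  apply: (condRD z (SB := ([set Complier] `*` setT) `*` S)).
  - by apply: measurableX => //; apply: measurableX.
  - by move=> x /=; tauto.
  - by mvt.
rewrite -E1.
have hb0 : pr P (fun x => Zv M x = z) != 0 by rewrite gt_eqF // pZ_pos.
apply: (mulIf hb0); rewrite divfK // mulrC.
have -> : pr P (fun x => Zv M x = z /\ (Uv M x = Complier /\ S (Yv M x))) =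
          pr P (fun x => Zv M x = z /\ (Uv M x = Complier /\ S ((if z then Y1v M else Y0v M) x))).
  by apply: pr_ext => x; rewrite /Yv; case: z {E1 hb0} => /=; split => -[e]; rewrite e; tauto.
case: z {E1} hb0 => hb0.
- symmetry; apply: (indZ true (SB := ([set true] `*` [set false] `*` S) `*` setT)).
  + by apply: measurableX => //; apply: measurableX => //; apply: measurableX.
  + by move=> x /=; rewrite U_iff /=; tauto.
  + by mvt.
- symmetry; apply: (indZ false (SB := ([set true] `*` [set false] `*` setT) `*` S)).
  + by apply: measurableX => //; apply: measurableX => //; apply: measurableX.
  + by move=> x /=; rewrite U_iff /=; tauto.
  + by mvt.
Qed.

Lemma Diff S : measurable S ->
  pr P (fun x => S (Y1v M x)) - pr P (fun x => S (Y0v M x)) =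
  pr P (fun x => Uv M x = Complier /\ S (Y1v M x)) - pr P (fun x => Uv M x = Complier /\ S (Y0v M x)).
Proof.
move=> mS.
rewrite (pr_split P (F := fun x => Uv M x = Complier) (mevY1 mS) (mevU _)).
rewrite (pr_split P (F := fun x => Uv M x = Complier) (mevY0 mS) (mevU _)).
have -> : pr P (fun x => S (Y1v M x) /\ Uv M x <> Complier) = pr P (fun x => S (Y0v M x) /\ Uv M x <> Complier).
  apply: pr_ext => x; have := @noDef x; have := @Hex x; case: (Uv M x) => h hd.
  - by rewrite h; [split|left].
  - by split => -[].
  - by case: hd.
  - by rewrite h; [split|right].
rewrite (@pr_ext _ _ _ _ (fun x => S (Y1v M x) /\ Uv M x = Complier) (fun x => Uv M x = Complier /\ S (Y1v M x))); last by move=> x; tauto.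
rewrite (@pr_ext _ _ _ _ (fun x => S (Y0v M x) /\ Uv M x = Complier) (fun x => Uv M x = Complier /\ S (Y0v M x))); last by move=> x; tauto.
ring.
Qed.


Lemma Prpos (E F : T -> Prop) : (0 < Pr P E)%E -> (forall x, E x <-> F x) -> mev F -> 0 < pr P F.
Proof.
move=> h hEF mF; rewrite -lte_fin -Pfin //.
by rewrite (_ : [set x | F x] = [set x | E x]) //; apply/seteqP; split => x /hEF.
Qed.

Lemma split_D (E : T -> Prop) : mev E ->
  pr P E = pr P (fun x => E x /\ Dv M x = true) + pr P (fun x => E x /\ Dv M x = false).
Proof.
move=> mE; rewrite (pr_split P mE (mevD true)); congr (_ + _).
by apply: pr_ext => x; rewrite bool_neg.
Qed.

Hypotheses (HZDc : cindep P (RYv M) (fun x => (Uv M x, Yv M x)) (fun x => (Zv M x, Dv M x, RDv M x)))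
  (HZDp : forall z dd : bool, (0 < Pr P (fun x => [/\ RYv M x = true, Zv M x = z,
                                         Dv M x = dd & RDv M x = true]))%E).

Lemma ZD_cell z dd S : measurable S ->
  pr P (fun x => RDv M x = true /\ Zv M x = z /\ S (Yv M x) /\ Dv M x = dd) * o3 P M z dd setT =
  o3 P M z dd S * o2 P M z dd.
Proof.
move=> mS; symmetry; rewrite [RHS]mulrC.
apply: (cind_use (SA := [set true]) (SB := setT `*` S) (HZDc (z, dd, true))) => //; try by mvt.
- exact: measurableX.
- move=> x /=; rewrite !pairE; tauto.
- move=> x /=; rewrite !pairE; tauto.
- move=> x /=; rewrite !pairE /setT /=; tauto.
- move=> x /=; rewrite !pairE; tauto.
Qed.


Lemma ZD_pos z dd : 0 < o3 P M z dd setT.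
Proof.
apply: (Prpos (HZDp z dd)); last by rewrite /o3; mvt.
by move=> x /=; split => [[]|[?[?[?[]]]]].
Qed.

Lemma ZD_formula z S : measurable S ->
  pr P (fun x => RDv M x = true /\ Zv M x = z /\ S (Yv M x)) =
  o3 P M z true S * o2 P M z true / o3 P M z true setT +
  o3 P M z false S * o2 P M z false / o3 P M z false setT.
Proof.
move=> mS; rewrite split_D; last by mvt.
have cell dd : pr P (fun x => (RDv M x = true /\ Zv M x = z /\ S (Yv M x)) /\ Dv M x = dd) =
    o3 P M z dd S * o2 P M z dd / o3 P M z dd setT.
  rewrite -(ZD_cell z dd mS) mulfK ?gt_eqF ?ZD_pos //.
  by apply: pr_ext => x; tauto.
by rewrite !cell.
Qed.


Lemma Ucases x : (Uv M x = Complier /\ Dv M x = Zv M x) \/ (Uv M x = ot (Dv M x) /\ Uv M x <> Complier).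
Proof.
rewrite /Uv /Dv; have := @Hmono x.
by case: (D1v M x); case: (D0v M x); case: (Zv M x) => h /=; (try by left; split); (try by right; split); have := h isT.
Qed.

Lemma Dot x b : Uv M x = ot b -> Dv M x = b.
Proof.
rewrite /Uv /Dv; have := @Hmono x.
by case: b; case: (D1v M x); case: (D0v M x); case: (Zv M x).
Qed.

Lemma DC x : Uv M x = Complier -> Dv M x = Zv M x.
Proof. by rewrite /Uv /Dv; case: (D1v M x); case: (D0v M x); case: (Zv M x). Qed.

Lemma otC b : ot b <> Complier. Proof. by case: b. Qed.

Lemma cellO z S : measurable S -> o3 P M (~~ z) z S = Vu P M (ot z) (~~ z) S.
Proof.
move=> mS; apply: pr_ext => x; split.
- move=> [h1 [h2 [h3 [h4 h5]]]]; do 2 split => //.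
  case: (Ucases x) => -[hu hd]; first by move: hd; rewrite h3 h2; case: z {h2 h3}.
  by rewrite hu h3.
- move=> [h1 [h2 [h3 [h4 h5]]]]; do 2 split => //; split; last by [].
  exact: Dot.
Qed.

Lemma cellC z S : measurable S -> o3 P M z z S = Vu P M (ot z) z S + Vu P M Complier z S.
Proof.
move=> mS; rewrite /Vu -pr_disj; first last.
- by move=> x [_ [_ [-> _]]] [_ [_ [/otC]]].
- by mvt.
- by mvt.
apply: pr_ext => x; split.
- move=> [h1 [h2 [h3 [h4 h5]]]].
  case: (Ucases x) => -[hu hd]; first by right; do 2 split => //; split.
  by left; do 2 split => //; rewrite hu h3.
- case=> [[h1 [h2 [h3 [h4 h5]]]]|[h1 [h2 [h3 [h4 h5]]]]]; do 2 split => //; split => //.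
  + exact: Dot.
  + by rewrite DC.
Qed.

Lemma Wot z z' S : measurable S ->
  Wu P M (ot z) z' S = o1 P M z' * pr P (fun x => Uv M x = ot z /\ S (Y1v M x)).
Proof.
move=> mS.
have hb0 : pr P (fun x => Zv M x = z') != 0 by rewrite gt_eqF // pZ_pos.
have E1 := rdZ z' (SB := ([set ot z] `*` setT) `*` S) (E := fun x => Uv M x = ot z /\ S (Yv M x)).
rewrite /= in E1; rewrite /Wu; apply: (mulIf hb0); rewrite E1; last 3 first.
- by apply: measurableX => //; apply: measurableX.
- by move=> x /=; tauto.
- by mvt.
rewrite /o1 -mulrA; congr (_ * _); rewrite mulrC.
rewrite (@pr_ext _ _ _ _ _ (fun x => Zv M x = z' /\ (Uv M x = ot z /\ S (Y1v M x)))); last first.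
  have hY y : Uv M y = ot z -> Yv M y = Y1v M y.
    move=> hu; rewrite /Yv; case: (Zv M y) => //; rewrite Hex //.
    by case: (z) hu => ->; [left|right].
  by move=> x; split=> -[h1 [h2 h3]]; do 2 split => //; [rewrite -hY | rewrite hY].
apply: (indZ z' (SB := ([set (status_enc (ot z)).1] `*` [set (status_enc (ot z)).2] `*` S) `*` setT)).
- by apply: measurableX => //; apply: measurableX => //; apply: measurableX.
- by move=> x /=; rewrite U_iff; tauto.
- by mvt.
Qed.


Lemma Vc_formula z S : measurable S ->
  Vu P M (ot z) true S * o1 P M false = Vu P M (ot z) false S * o1 P M true ->
  Vu P M Complier z S = o3 P M z z S - o3 P M (~~ z) z S * o1 P M z / o1 P M (~~ z).
Proof.
move=> mS rel; rewrite (cellC z mS) (cellO z mS).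
have h0 := oZR_pos false; have h1 := oZR_pos true.
rewrite /o1 in rel *.
case: z rel => /= rel.
- rewrite -rel mulfK ?gt_eqF //; ring.
- rewrite rel mulfK ?gt_eqF //; ring.
Qed.

Lemma pc_obs : pr P (fun x => Uv M x = Complier) =
  o2 P M true true / o1 P M true - o2 P M false true / o1 P M false.
Proof. by rewrite pc_eq (DzRD true) (DzRD false). Qed.

Lemma WcT z : Wu P M Complier z setT = o1 P M z * pr P (fun x => Uv M x = Complier).
Proof.
have := CzRD z measurableT; rewrite (@pr_ext _ _ _ _ _ (fun x => Uv M x = Complier)); last first.
  by move=> x; split => [[]|].
move=> ->; rewrite /Wu /o1 mulrC divfK ?gt_eqF ?oZR_pos //.
Qed.

Hypotheses (HUDc : cindep P (RYv M) (fun x => (Zv M x, Yv M x)) (fun x => (Uv M x, Dv M x, RDv M x)))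
  (HUDp : forall dd : bool, (0 < Pr P (fun x => [/\ RYv M x = true, Uv M x = Complier,
                                       Dv M x = dd & RDv M x = true]))%E).

Lemma UD_rel u dd z' S : measurable S -> (forall x, Uv M x = u -> Zv M x = z' -> Dv M x = dd) ->
  Vu P M u z' S * pr P (fun x => Uv M x = u /\ Dv M x = dd /\ RDv M x = true) =
  pr P (fun x => RYv M x = true /\ Uv M x = u /\ Dv M x = dd /\ RDv M x = true) * Wu P M u z' S.
Proof.
move=> mS hud.
apply: (cind_use (SA := [set true]) (SB := [set z'] `*` S) (HUDc (u, dd, true))) => //; try by mvt.
- exact: measurableX.
- move=> x /=; rewrite !pairE; split; first tauto.
  move=> [h1 [h2 [h3 [h4 h5]]]]; have := hud x h3 h2; tauto.
- move=> x /=; rewrite !pairE; tauto.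
- move=> x /=; rewrite !pairE; tauto.
- move=> x /=; rewrite !pairE; split; first tauto.
  move=> [h1 [h2 [h3 h5]]]; have := hud x h3 h2; tauto.
Qed.

Lemma UD_Vc z S : measurable S ->
  Vu P M Complier z S = o3 P M z z S - o3 P M (~~ z) z S * o1 P M z / o1 P M (~~ z).
Proof.
move=> mS; apply: Vc_formula => //.
have hud z' : forall x, Uv M x = ot z -> Zv M x = z' -> Dv M x = z by move=> x /Dot.
have hN z' : pr P (fun x => Uv M x = ot z /\ Dv M x = z /\ RDv M x = true) = 0 -> Vu P M (ot z) z' S = 0.
  move=> h; apply/eqP; rewrite eq_le pr_ge0 andbT -h; apply: pr_mono; try by mvt.
  by move=> x [h1 [h2 [h3 [h4 h5]]]]; do 2 split => //; exact: Dot.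
apply: (ratio_rel (UD_rel mS (hud true)) (UD_rel mS (hud false)) (Wot z true mS) (Wot z false mS)).
by move=> h; split; apply: hN.
Qed.

Lemma UD_formula z S : measurable S ->
  Wu P M Complier z S =
  (o3 P M z z S - o3 P M (~~ z) z S * o1 P M z / o1 P M (~~ z)) *
  (o1 P M z * (o2 P M true true / o1 P M true - o2 P M false true / o1 P M false)) /
  (o3 P M z z setT - o3 P M (~~ z) z setT * o1 P M z / o1 P M (~~ z)).
Proof.
move=> mS; rewrite -!UD_Vc // -pc_obs -WcT.
have hud : forall x, Uv M x = Complier -> Zv M x = z -> Dv M x = z by move=> x /DC ->.
have e1 := UD_rel mS hud; have e2 := UD_rel measurableT hud.
have hpos : 0 < Vu P M Complier z setT.
  apply: (Prpos (HUDp z)); last by rewrite /Vu; mvt.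
  move=> x /=; split.
  - move=> [h1 h2 h3 h4]; do 2 split => //; last by rewrite -(DC h2).
  - move=> [h1 [h2 [h3 [h4 _]]]]; split => //; by rewrite DC.
have eN : Wu P M Complier z setT = pr P (fun x => Uv M x = Complier /\ Dv M x = z /\ RDv M x = true).
  apply: pr_ext => x /=; split.
  - move=> [h1 [h2 [h3 _]]]; do 2 split => //; by rewrite DC.
  - move=> [h1 [h2 h3]]; do 2 split => //; by rewrite -(DC h1).
have eR : Vu P M Complier z setT = pr P (fun x => RYv M x = true /\ Uv M x = Complier /\ Dv M x = z /\ RDv M x = true).
  apply: pr_ext => x /=; split.
  - move=> [h1 [h2 [h3 [h4 _]]]]; do 3 split => //; by rewrite DC.
  - move=> [h1 [h2 [h3 h4]]]; do 2 split => //; last by rewrite -(DC h2).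
rewrite eN e1 -eR mulrC mulKf // gt_eqF //.
Qed.


Section DY.
Hypotheses (HDYc : cindep P (RYv M) (fun x => (Zv M x, Uv M x)) (fun x => (Dv M x, Yv M x, RDv M x)))
  (binY : binaryY M)
  (HDYp : forall dd y : bool, (0 < Pr P (fun x => [/\ RYv M x = true, Dv M x = dd,
                                     Yv M x = y%:R & RDv M x = true]))%E)
  (HDYn : forall dd : bool, ~ cindep_at P (Yv M) (Zv M) (fun x => (Dv M x, RDv M x)) (dd, true)).

Let Wd z dd (y : R) := pr P (fun x => RDv M x = true /\ Zv M x = z /\ Dv M x = dd /\ Yv M x = y).
Let rho dd (y : R) := pr P (fun x => RYv M x = true /\ Dv M x = dd /\ Yv M x = y /\ RDv M x = true).
Let Nd dd (y : R) := pr P (fun x => Dv M x = dd /\ Yv M x = y /\ RDv M x = true).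

Lemma DY_cell z dd y : o3 P M z dd [set y] * Nd dd y = rho dd y * Wd z dd y.
Proof.
apply: (cind_use (SA := [set true]) (SB := [set z] `*` setT) (HDYc (dd, y, true))) => //; try by mvt.
- exact: measurableX.
- move=> x /=; rewrite !pairE; tauto.
- move=> x /=; rewrite !pairE; tauto.
- move=> x /=; rewrite !pairE; tauto.
- move=> x /=; rewrite !pairE; tauto.
Qed.

Lemma DY_rpos dd (y : bool) : 0 < rho dd y%:R.
Proof.
apply: (Prpos (HDYp dd y)); last by mvt.
by move=> x; split => [[]|[?[?[]]]].
Qed.

Lemma DY_W z dd (y : bool) : Wd z dd y%:R = o3 P M z dd [set y%:R] * (Nd dd y%:R / rho dd y%:R).
Proof.
have h := DY_rpos dd y.
by rewrite mulrA DY_cell mulrC mulrA mulVf ?gt_eqF // mul1r.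
Qed.

Lemma DY_sum z dd : Wd z dd 0 + Wd z dd 1 = o2 P M z dd.
Proof.
rewrite /o2 (split_Y P binY mYv); last by mvt.
by congr (_ + _); apply: pr_ext => x; tauto.
Qed.

Lemma DY_det dd : Wd false dd 0 * Wd true dd 1 = Wd false dd 1 * Wd true dd 0 -> False.
Proof.
move=> h; apply: (@HDYn dd); apply: (atoms_cindep binY mYv mZ).
  apply: (mev_ext (F := fun x => Dv M x = dd /\ RDv M x = true)); last by mvt.
  by move=> x; rewrite pairE.
have e b y : pr P (fun x => (Dv M x, RDv M x) = (dd, true) /\ Zv M x = b /\ Yv M x = y) = Wd b dd y.
  by apply: pr_ext => x; rewrite pairE; tauto.
by rewrite !e.
Qed.

Lemma DY_formula1 dd :
  Wd false dd 1 = o3 P M false dd [set 1] *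
    ((o3 P M false dd [set 0] * o2 P M true dd - o3 P M true dd [set 0] * o2 P M false dd) /
     (o3 P M false dd [set 0] * o3 P M true dd [set 1] - o3 P M false dd [set 1] * o3 P M true dd [set 0])) /\
  Wd true dd 1 = o3 P M true dd [set 1] *
    ((o3 P M false dd [set 0] * o2 P M true dd - o3 P M true dd [set 0] * o2 P M false dd) /
     (o3 P M false dd [set 0] * o3 P M true dd [set 1] - o3 P M false dd [set 1] * o3 P M true dd [set 0])).
Proof.
apply: sys_solve.
- exact: (DY_W false dd false).
- exact: (DY_W false dd true).
- exact: (DY_W true dd false).
- exact: (DY_W true dd true).
- exact: DY_sum.
- exact: DY_sum.
- exact: DY_det.
Qed.


Lemma DY_g z : pr P (fun x => RDv M x = true /\ Zv M x = z /\ Yv M x = 1) =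
  dyterm P M z true + dyterm P M z false.
Proof.
rewrite split_D; last by mvt.
have e dd : Wd z dd 1 = dyterm P M z dd.
  by have [h0 h1] := DY_formula1 dd; case: z; [exact: h1 | exact: h0].
rewrite -!e; congr (_ + _); apply: pr_ext => x; tauto.
Qed.

Lemma DY_target z S : measurable S ->
  pr P (fun x => RDv M x = true /\ Zv M x = z /\ S (Yv M x)) =
  ind (S 1) * (dyterm P M z true + dyterm P M z false) +
  ind (S 0) * (o1 P M z - (dyterm P M z true + dyterm P M z false)).
Proof.
move=> mS; rewrite -DY_g.
have := bin_split P binY mYv (E := fun x => RDv M x = true /\ Zv M x = z) (S := S).
rewrite (@pr_ext _ _ _ _ (fun x => (RDv M x = true /\ Zv M x = z) /\ S (Yv M x))
   (fun x => RDv M x = true /\ Zv M x = z /\ S (Yv M x))); last by move=> x; tauto.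
rewrite (@pr_ext _ _ _ _ (fun x => (RDv M x = true /\ Zv M x = z) /\ Yv M x = 1)
   (fun x => RDv M x = true /\ Zv M x = z /\ Yv M x = 1)); last by move=> x; tauto.
by move=> ->; [| mvt |].
Qed.
End DY.


Section ZY.
Hypotheses (HZYc : cindep P (RYv M) (fun x => (Uv M x, Dv M x)) (fun x => (Zv M x, Yv M x, RDv M x)))
  (binY : binaryY M)
  (HZYp : forall z y : bool, (0 < Pr P (fun x => [/\ RYv M x = true, Zv M x = z,
                                     Yv M x = y%:R & RDv M x = true]))%E)
  (HZYn : forall z : bool, ~ cindep_at P (Yv M) (Dv M) (Zv M) z).

Let Wd z dd (y : R) := pr P (fun x => RDv M x = true /\ Zv M x = z /\ Dv M x = dd /\ Yv M x = y).
Let rho z (y : R) := pr P (fun x => RYv M x = true /\ Zv M x = z /\ Yv M x = y /\ RDv M x = true).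
Let Nd z (y : R) := pr P (fun x => Zv M x = z /\ Yv M x = y /\ RDv M x = true).

Lemma ZY_cell z dd y : o3 P M z dd [set y] * Nd z y = rho z y * Wd z dd y.
Proof.
apply: (cind_use (SA := [set true]) (SB := setT `*` [set dd]) (HZYc (z, y, true))) => //; try by mvt.
- exact: measurableX.
- move=> x /=; rewrite !pairE; tauto.
- move=> x /=; rewrite !pairE; tauto.
- move=> x /=; rewrite !pairE; tauto.
- move=> x /=; rewrite !pairE; tauto.
Qed.

Lemma ZY_rpos z (y : bool) : 0 < rho z y%:R.
Proof.
apply: (Prpos (HZYp z y)); last by mvt.
by move=> x; split => [[]|[?[?[]]]].
Qed.

Lemma ZY_W z dd (y : bool) : Wd z dd y%:R = o3 P M z dd [set y%:R] * (Nd z y%:R / rho z y%:R).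
Proof.
have h := ZY_rpos z y.
by rewrite mulrA ZY_cell mulrC mulrA mulVf ?gt_eqF // mul1r.
Qed.

Lemma ZY_sum z dd : Wd z dd 0 + Wd z dd 1 = o2 P M z dd.
Proof.
rewrite /o2 (split_Y P binY mYv); last by mvt.
by congr (_ + _); apply: pr_ext => x; tauto.
Qed.

Lemma ZY_A z b (y : R) : pr P (fun x => Zv M x = z /\ Dv M x = b /\ Yv M x = y) =
  Wd z b y * (pr P (fun x => Zv M x = z) / o1 P M z).
Proof.
have hpos := oZR_pos z.
have e : Wd z b y * pr P (fun x => Zv M x = z) = o1 P M z * pr P (fun x => Zv M x = z /\ Dv M x = b /\ Yv M x = y).
  apply: (rdZ z (SB := (setT `*` [set b]) `*` [set y]) (E := fun x => Dv M x = b /\ Yv M x = y)).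
  - by apply: measurableX; [apply: measurableX | exact: measurable_set1].
  - by move=> x /=; tauto.
  - by mvt.
by rewrite mulrA e mulrAC divff ?mul1r // gt_eqF.
Qed.

Lemma ZY_det z : Wd z false 0 * Wd z true 1 = Wd z false 1 * Wd z true 0 -> False.
Proof.
move=> h; apply: (@HZYn z); apply: (atoms_cindep binY mYv mDv); first by mvt.
rewrite !ZY_A.
set c := (pr P _ / _).
have -> : Wd z false 0 * c * (Wd z true 1 * c) = (Wd z false 0 * Wd z true 1) * (c * c) by ring.
by rewrite h; ring.
Qed.

Lemma ZY_g z : pr P (fun x => RDv M x = true /\ Zv M x = z /\ Yv M x = 1) =
  zyterm P M z true + zyterm P M z false.
Proof.
rewrite split_D; last by mvt.
have [h0 h1] : Wd z false 1 = zyterm P M z false /\ Wd z true 1 = zyterm P M z true.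
  apply: sys_solve.
  - exact: (ZY_W z false false).
  - exact: (ZY_W z false true).
  - exact: (ZY_W z true false).
  - exact: (ZY_W z true true).
  - exact: ZY_sum.
  - exact: ZY_sum.
  - exact: ZY_det.
rewrite -h0 -h1; congr (_ + _); apply: pr_ext => x; tauto.
Qed.

Lemma ZY_target z S : measurable S ->
  pr P (fun x => RDv M x = true /\ Zv M x = z /\ S (Yv M x)) =
  ind (S 1) * (zyterm P M z true + zyterm P M z false) +
  ind (S 0) * (o1 P M z - (zyterm P M z true + zyterm P M z false)).
Proof.
move=> mS; rewrite -ZY_g.
have := bin_split P binY mYv (E := fun x => RDv M x = true /\ Zv M x = z) (S := S).
rewrite (@pr_ext _ _ _ _ (fun x => (RDv M x = true /\ Zv M x = z) /\ S (Yv M x))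
   (fun x => RDv M x = true /\ Zv M x = z /\ S (Yv M x))); last by move=> x; tauto.
rewrite (@pr_ext _ _ _ _ (fun x => (RDv M x = true /\ Zv M x = z) /\ Yv M x = 1)
   (fun x => RDv M x = true /\ Zv M x = z /\ Yv M x = 1)); last by move=> x; tauto.
by move=> ->; [| mvt |].
Qed.

End ZY.


Section UY.
Hypotheses (HUYc : cindep P (RYv M) (fun x => (Zv M x, Dv M x)) (fun x => (Uv M x, Yv M x, RDv M x)))
  (binY : binaryY M)
  (HUYp : forall y : bool, (0 < Pr P (fun x => [/\ RYv M x = true, Uv M x = Complier,
                                      Yv M x = y%:R & RDv M x = true]))%E).

Lemma UY_rel u (y : R) z' dd : (forall x, Uv M x = u -> Zv M x = z' -> Dv M x = dd) ->
  Vu P M u z' [set y] * pr P (fun x => Uv M x = u /\ Yv M x = y /\ RDv M x = true) =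
  pr P (fun x => RYv M x = true /\ Uv M x = u /\ Yv M x = y /\ RDv M x = true) * Wu P M u z' [set y].
Proof.
move=> hud.
apply: (cind_use (SA := [set true]) (SB := [set z'] `*` [set dd]) (HUYc (u, y, true))) => //; try by mvt.
- exact: measurableX.
- move=> x /=; rewrite !pairE; split; first tauto.
  move=> [h1 [h2 [h3 [h4 h5]]]]; have := hud x h3 h2; tauto.
- move=> x /=; rewrite !pairE; tauto.
- move=> x /=; rewrite !pairE; tauto.
- move=> x /=; rewrite !pairE; split; first tauto.
  move=> [h1 [h2 [h3 h5]]]; have := hud x h3 h2; tauto.
Qed.

Lemma UY_Vc z (y : R) : Vu P M Complier z [set y] = Aterm P M z [set y].
Proof.
apply: Vc_formula; first exact: measurable_set1.
have hud z' : forall x, Uv M x = ot z -> Zv M x = z' -> Dv M x = z by move=> x /Dot.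
have hN z' : pr P (fun x => Uv M x = ot z /\ Yv M x = y /\ RDv M x = true) = 0 -> Vu P M (ot z) z' [set y] = 0.
  move=> h; apply/eqP; rewrite eq_le pr_ge0 andbT -h; apply: pr_mono; try by mvt.
  by move=> x [h1 [h2 [h3 [h4 h5]]]]; do 2 split => //.
apply: (ratio_rel (UY_rel y (hud true)) (UY_rel y (hud false)) (Wot z true (measurable_set1 y))
   (Wot z false (measurable_set1 y))).
by move=> h; split; apply: hN.
Qed.

Lemma UY_rpos (y : bool) : 0 < pr P (fun x => RYv M x = true /\ Uv M x = Complier /\ Yv M x = y%:R /\ RDv M x = true).
Proof.
apply: (Prpos (HUYp y)); last by mvt.
by move=> x; split => [[]|[?[?[]]]].
Qed.

Lemma UY_W z (y : bool) : Wu P M Complier z [set y%:R] = Aterm P M z [set y%:R] *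
  (pr P (fun x => Uv M x = Complier /\ Yv M x = y%:R /\ RDv M x = true) /
   pr P (fun x => RYv M x = true /\ Uv M x = Complier /\ Yv M x = y%:R /\ RDv M x = true)).
Proof.
have h := UY_rpos y.
have hud : forall x, Uv M x = Complier -> Zv M x = z -> Dv M x = z by move=> x /DC ->.
by rewrite -UY_Vc mulrA (UY_rel _ hud) mulrC mulrA mulVf ?gt_eqF // mul1r.
Qed.

Lemma UY_sum z : Wu P M Complier z [set 0] + Wu P M Complier z [set 1] = o1 P M z * pcO P M.
Proof.
rewrite /pcO -pc_obs -WcT /Wu (split_Y P binY mYv (E := fun x => RDv M x = true /\ Zv M x = z /\ (Uv M x = Complier /\ setT (Yv M x)))); last by mvt.
by congr (_ + _); apply: pr_ext => x /=; tauto.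
Qed.

Lemma pc_pos : 0 < pr P (fun x => Uv M x = Complier).
Proof.
apply: (lt_le_trans (UY_rpos true)); apply: pr_mono; try by mvt.
by move=> x [_ []].
Qed.

Lemma UY_X : Wu P M Complier true [set 1] / o1 P M true - Wu P M Complier false [set 1] / o1 P M false = uyX P M.
Proof.
have s := UY_sum.
have [T0 [ef0 et0]] : exists T0, Wu P M Complier false [set 0] = Aterm P M false [set 0] * T0 /\
    Wu P M Complier true [set 0] = Aterm P M true [set 0] * T0.
  by eexists; split; [exact: (UY_W false false) | exact: (UY_W true false)].
have [T1 [ef1 et1]] : exists T1, Wu P M Complier false [set 1] = Aterm P M false [set 1] * T1 /\
    Wu P M Complier true [set 1] = Aterm P M true [set 1] * T1.
  by eexists; split; [exact: (UY_W false true) | exact: (UY_W true true)].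
have sf := s false; have st := s true.
rewrite ef0 ef1 in sf; rewrite et0 et1 in st.
have h1 := oZR_pos true; have h0 := oZR_pos false.
have hpc : 0 < pcO P M by rewrite /pcO -pc_obs pc_pos.
rewrite ef1 et1 /uyX.
set af0 := Aterm P M false [set 0] in sf *; set af1 := Aterm P M false [set 1] in sf *.
set at0 := Aterm P M true [set 0] in st *; set at1 := Aterm P M true [set 1] in st *.
set l1 := o1 P M true in h1 st *; set l0 := o1 P M false in h0 sf *.
have l1n : l1 != 0 by rewrite gt_eqF.
have l0n : l0 != 0 by rewrite gt_eqF.
have [hdet|hdet] := eqVneq (af0 * at1 - af1 * at0) 0.
- have := cramer0 sf st hdet => h.
  have pcn : pcO P M != 0 by rewrite gt_eqF.
  have e2 : at1 * l0 = af1 * l1.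
    by apply: (mulIf pcn); rewrite -!mulrA -h.
  have -> : at1 * T1 / l1 = (at1 * l0) * T1 / (l0 * l1).
    by field; rewrite l1n l0n.
  have -> : af1 * T1 / l0 = (af1 * l1) * T1 / (l0 * l1) by field; rewrite l1n l0n.
  by rewrite e2 subrr.
- have := cramer sf st => h.
  rewrite -h mulfK //; ring.
Qed.

Lemma UY_delta S : measurable S ->
  Wu P M Complier true S / o1 P M true - Wu P M Complier false S / o1 P M false =
  (ind (S 1) - ind (S 0)) * uyX P M.
Proof.
move=> mS; rewrite -UY_X.
have bs z : Wu P M Complier z S = ind (S 1) * Wu P M Complier z [set 1] +
    ind (S 0) * (o1 P M z * pcO P M - Wu P M Complier z [set 1]).
  rewrite /pcO -pc_obs -WcT.
  have := bin_split P binY mYv (E := fun x => RDv M x = true /\ Zv M x = z /\ Uv M x = Complier) (S := S).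
  rewrite /Wu (@pr_ext _ _ _ _ (fun x => (RDv M x = true /\ Zv M x = z /\ Uv M x = Complier) /\ S (Yv M x))
     (fun x => RDv M x = true /\ Zv M x = z /\ (Uv M x = Complier /\ S (Yv M x)))); last by move=> x; tauto.
  rewrite (@pr_ext _ _ _ _ (fun x => (RDv M x = true /\ Zv M x = z /\ Uv M x = Complier) /\ Yv M x = 1)
     (fun x => RDv M x = true /\ Zv M x = z /\ (Uv M x = Complier /\ [set 1] (Yv M x)))); last by move=> x; tauto.
  rewrite (@pr_ext _ _ _ _ (fun x => RDv M x = true /\ Zv M x = z /\ Uv M x = Complier)
     (fun x => RDv M x = true /\ Zv M x = z /\ (Uv M x = Complier /\ setT (Yv M x)))); last by move=> x /=; tauto.
  by move=> ->; [| mvt |].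
have h1 := oZR_pos true; have h0 := oZR_pos false.
rewrite !bs; field; rewrite !gt_eqF //.
Qed.

End UY.

End Model.

Lemma push_int {R : realType} {d} {T : measurableType d} (P : probability T R) (f : T -> R) :
  measurable_fun setT f -> P.-integrable setT (fun x => (f x)%:E) ->
  (\int[P]_x (f x)%:E = \int[pushforward P f]_(y in setT) (y%:E))%E /\
  (pushforward P f).-integrable setT (fun y : R => y%:E).
Proof.
move=> mf fi; split; first by rewrite integral_pushforward.
apply: integrable_pushforward => //; exact: measurable_realfun.EFin_measurable.
Qed.

Lemma final {R : realType} d1 (T1 : measurableType d1) (P1 : probability T1 R) (M1 : ivmodel R T1)
  d2 (T2 : measurableType d2) (P2 : probability T2 R) (M2 : ivmodel R T2) :
  iv_assumptions P1 M1 -> iv_assumptions P2 M2 ->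
  pr P1 (fun x => D1v M1 x = true) - pr P1 (fun x => D0v M1 x = true) =
  pr P2 (fun x => D1v M2 x = true) - pr P2 (fun x => D0v M2 x = true) ->
  (forall S, measurable S ->
     pr P1 (fun x => S (Y1v M1 x)) - pr P1 (fun x => S (Y0v M1 x)) =
     pr P2 (fun x => S (Y1v M2 x)) - pr P2 (fun x => S (Y0v M2 x))) ->
  cace P1 M1 = cace P2 M2.
Proof.
move=> [[mZ [mD1 [mD0 [mY1 [mY0 [mRD mRY]]]]]] [iY1 [iY0 [Hind [Hmono [Hn0 Hex]]]]]].
move=> [[mZ' [mD1' [mD0' [mY1' [mY0' [mRD' mRY']]]]]] [iY1' [iY0' [Hind' [Hmono' [Hn0' Hex']]]]]].
move=> HD HS.
rewrite !cace_eq //; congr (_ / _) => //.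
have [e11 i11] := push_int mY1 iY1.
have [e10 i10] := push_int mY0 iY0.
have [e21 i21] := push_int mY1' iY1'.
have [e20 i20] := push_int mY0' iY0'.
have mE := @measurable_realfun.EFin_measurable R setT.
have H : (\int[measure_add (pushforward P1 (Y1v M1)) (pushforward P2 (Y0v M2))]_(y in setT) y%:E =
         \int[measure_add (pushforward P2 (Y1v M2)) (pushforward P1 (Y0v M1))]_(y in setT) y%:E)%E.
  move=> ? ? ? ?; apply: eq_measure_integral => A mA _.
  rewrite /= /msum !big_ord_recl !big_ord0 /= !adde0 /pushforward.
  rewrite -[Y1v M2 @^-1` A]/[set x | A (Y1v M2 x)] -[Y0v M1 @^-1` A]/[set x | A (Y0v M1 x)].
  rewrite !Pfin; try exact: mev_pre.
  rewrite -!EFinD; congr (_%:E).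
  have := HS A mA; lra.
move: (H mY1 mY0' mY1' mY0) => {}H.
rewrite !integral_measure_add // in H.
rewrite -e11 -e10 -e21 -e20 in H.
have f11 := integrable_fin_num measurableT iY1.
have f10 := integrable_fin_num measurableT iY0.
have f21 := integrable_fin_num measurableT iY1'.
have f20 := integrable_fin_num measurableT iY0'.
have := congr1 fine H; rewrite (fineD f11 f20) (fineD f21 f10); lra.
Qed.

Section Obs.
Context {R : realType}.

Variables (d1 : measure_display) (T1 : measurableType d1) (P1 : probability T1 R) (M1 : ivmodel R T1)
  (d2 : measure_display) (T2 : measurableType d2) (P2 : probability T2 R) (M2 : ivmodel R T2).
Hypothesis HO : same_obs_law P1 M1 P2 M2.

Lemma obs_pr Q : measurable Q -> pr P1 (fun x => Q (obs M1 x)) = pr P2 (fun x => Q (obs M2 x)).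
Proof. by move=> mQ; rewrite /pr; have := HO mQ => ->. Qed.

Lemma mQ5 (A B C D : set bool) (S : set R) : measurable S -> measurable (A `*` B `*` C `*` D `*` S).
Proof. by move=> mS; repeat apply: measurableX => //. Qed.

Lemma o3_eq z dd S : measurable S -> o3 P1 M1 z dd S = o3 P2 M2 z dd S.
Proof.
move=> mS; have := obs_pr (mQ5 [set z] [set true] [set dd] [set true] mS).
rewrite /o3 (@pr_ext _ _ _ P1 (fun x => _ (obs M1 x))
   (fun x => RDv M1 x = true /\ Zv M1 x = z /\ Dv M1 x = dd /\ RYv M1 x = true /\ S (Yv M1 x))); last first.
  move=> x; rewrite /obs /=; case: (RDv M1 x); case: (RYv M1 x) => /=; intuition (try discriminate).
rewrite (@pr_ext _ _ _ P2 (fun x => _ (obs M2 x))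
   (fun x => RDv M2 x = true /\ Zv M2 x = z /\ Dv M2 x = dd /\ RYv M2 x = true /\ S (Yv M2 x))) //.
move=> x; rewrite /obs /=; case: (RDv M2 x); case: (RYv M2 x) => /=; intuition (try discriminate).
Qed.

Lemma o2_eq z dd : o2 P1 M1 z dd = o2 P2 M2 z dd.
Proof.
have := obs_pr (mQ5 [set z] [set true] [set dd] setT measurableT).
rewrite /o2 (@pr_ext _ _ _ P1 (fun x => _ (obs M1 x))
   (fun x => RDv M1 x = true /\ Zv M1 x = z /\ Dv M1 x = dd)); last first.
  move=> x; rewrite /obs /=; case: (RDv M1 x) => /=; intuition (try discriminate).
rewrite (@pr_ext _ _ _ P2 (fun x => _ (obs M2 x))
   (fun x => RDv M2 x = true /\ Zv M2 x = z /\ Dv M2 x = dd)) //.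
move=> x; rewrite /obs /=; case: (RDv M2 x) => /=; intuition (try discriminate).
Qed.

Lemma o1_eq z : o1 P1 M1 z = o1 P2 M2 z.
Proof.
have := obs_pr (mQ5 [set z] [set true] setT setT measurableT).
rewrite /o1 (@pr_ext _ _ _ P1 (fun x => _ (obs M1 x))
   (fun x => RDv M1 x = true /\ Zv M1 x = z)); last first.
  move=> x; rewrite /obs /=; intuition.
rewrite (@pr_ext _ _ _ P2 (fun x => _ (obs M2 x))
   (fun x => RDv M2 x = true /\ Zv M2 x = z)) //.
move=> x; rewrite /obs /=; intuition.
Qed.

End Obs.

Ltac destr H := case: H => -[[mZ [mD1 [mD0 [mY1 [mY0 [mRD mRY]]]]]] [iY1 [iY0 [Hind [Hmono [Hn0 Hex]]]]]] [Hrd Hrdpos].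

Section Wrap.
Context {R : realType} {d : measure_display} {T : measurableType d}.
Variables (P : probability T R) (M : ivmodel R T).
Hypothesis G : iv_assumptions P M /\ rd_assumptions P M.

Lemma DzRD' z : pr P (fun x => (if z then D1v M else D0v M) x = true) = o2 P M z true / o1 P M z.
Proof. by destr G; apply: DzRD. Qed.

Lemma YzRD' z S : measurable S -> pr P (fun x => S ((if z then Y1v M else Y0v M) x)) =
  pr P (fun x => RDv M x = true /\ Zv M x = z /\ S (Yv M x)) / o1 P M z.
Proof. by destr G; apply: YzRD. Qed.

Lemma CzRD' z S : measurable S ->
  pr P (fun x => Uv M x = Complier /\ S ((if z then Y1v M else Y0v M) x)) =
  pr P (fun x => RDv M x = true /\ Zv M x = z /\ (Uv M x = Complier /\ S (Yv M x))) / o1 P M z.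
Proof. by destr G; apply: CzRD. Qed.

Lemma Diff' S : measurable S ->
  pr P (fun x => S (Y1v M x)) - pr P (fun x => S (Y0v M x)) =
  pr P (fun x => Uv M x = Complier /\ S (Y1v M x)) - pr P (fun x => Uv M x = Complier /\ S (Y0v M x)).
Proof. by destr G; apply: Diff. Qed.

Lemma ZD_formula' : case_ZD P M -> forall z S, measurable S ->
  pr P (fun x => RDv M x = true /\ Zv M x = z /\ S (Yv M x)) =
  o3 P M z true S * o2 P M z true / o3 P M z true setT +
  o3 P M z false S * o2 P M z false / o3 P M z false setT.
Proof. by destr G => -[HZDc HZDp] z S mS; apply: ZD_formula. Qed.

Lemma UD_formula' : case_UD P M -> forall z S, measurable S ->
  Wu P M Complier z S =
  (o3 P M z z S - o3 P M (~~ z) z S * o1 P M z / o1 P M (~~ z)) *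
  (o1 P M z * (o2 P M true true / o1 P M true - o2 P M false true / o1 P M false)) /
  (o3 P M z z setT - o3 P M (~~ z) z setT * o1 P M z / o1 P M (~~ z)).
Proof. by destr G => -[HUDc HUDp] z S mS; apply: UD_formula. Qed.

Lemma DY_target' : case_DY P M -> forall z S, measurable S ->
  pr P (fun x => RDv M x = true /\ Zv M x = z /\ S (Yv M x)) =
  ind (S 1) * (dyterm P M z true + dyterm P M z false) +
  ind (S 0) * (o1 P M z - (dyterm P M z true + dyterm P M z false)).
Proof. by destr G => -[HDYc [binY [_ [HDYp HDYn]]]] z S mS; apply: DY_target. Qed.

Lemma ZY_target' : case_ZY P M -> forall z S, measurable S ->
  pr P (fun x => RDv M x = true /\ Zv M x = z /\ S (Yv M x)) =
  ind (S 1) * (zyterm P M z true + zyterm P M z false) +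
  ind (S 0) * (o1 P M z - (zyterm P M z true + zyterm P M z false)).
Proof. by destr G => -[HZYc [binY [_ [HZYp HZYn]]]] z S mS; apply: ZY_target. Qed.

Lemma UY_delta' : case_UY P M -> forall S, measurable S ->
  Wu P M Complier true S / o1 P M true - Wu P M Complier false S / o1 P M false =
  (ind (S 1) - ind (S 0)) * uyX P M.
Proof. by destr G => -[HUYc [binY HUYp]] S mS; apply: UY_delta. Qed.

End Wrap.

Lemma frame_base {R : realType} d1 (T1 : measurableType d1) (P1 : probability T1 R) (M1 : ivmodel R T1)
  d2 (T2 : measurableType d2) (P2 : probability T2 R) (M2 : ivmodel R T2) :
  iv_assumptions P1 M1 /\ rd_assumptions P1 M1 -> iv_assumptions P2 M2 /\ rd_assumptions P2 M2 ->
  same_obs_law P1 M1 P2 M2 ->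
  (forall S, measurable S ->
     pr P1 (fun x => S (Y1v M1 x)) - pr P1 (fun x => S (Y0v M1 x)) =
     pr P2 (fun x => S (Y1v M2 x)) - pr P2 (fun x => S (Y0v M2 x))) ->
  cace P1 M1 = cace P2 M2.
Proof.
move=> G1 G2 HO HS; apply: final => //; [exact: G1.1 | exact: G2.1 |].
have := DzRD' G1 true; have := DzRD' G1 false; have := DzRD' G2 true; have := DzRD' G2 false => /= -> -> -> ->.
by rewrite !(o1_eq HO) !(o2_eq HO).
Qed.

Lemma frameZ {R : realType} d1 (T1 : measurableType d1) (P1 : probability T1 R) (M1 : ivmodel R T1)
  d2 (T2 : measurableType d2) (P2 : probability T2 R) (M2 : ivmodel R T2) :
  iv_assumptions P1 M1 /\ rd_assumptions P1 M1 -> iv_assumptions P2 M2 /\ rd_assumptions P2 M2 ->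
  same_obs_law P1 M1 P2 M2 ->
  (forall S, measurable S ->
     pr P1 (fun x => RDv M1 x = true /\ Zv M1 x = true /\ S (Yv M1 x)) / o1 P1 M1 true -
     pr P1 (fun x => RDv M1 x = true /\ Zv M1 x = false /\ S (Yv M1 x)) / o1 P1 M1 false =
     pr P2 (fun x => RDv M2 x = true /\ Zv M2 x = true /\ S (Yv M2 x)) / o1 P2 M2 true -
     pr P2 (fun x => RDv M2 x = true /\ Zv M2 x = false /\ S (Yv M2 x)) / o1 P2 M2 false) ->
  cace P1 M1 = cace P2 M2.
Proof.
move=> G1 G2 HO HS; apply: frame_base => // S mS.
have := YzRD' G1 true mS; have := YzRD' G1 false mS; have := YzRD' G2 true mS; have := YzRD' G2 false mS.
move=> /= -> -> -> ->; exact: HS.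
Qed.

Lemma frameC {R : realType} d1 (T1 : measurableType d1) (P1 : probability T1 R) (M1 : ivmodel R T1)
  d2 (T2 : measurableType d2) (P2 : probability T2 R) (M2 : ivmodel R T2) :
  iv_assumptions P1 M1 /\ rd_assumptions P1 M1 -> iv_assumptions P2 M2 /\ rd_assumptions P2 M2 ->
  same_obs_law P1 M1 P2 M2 ->
  (forall S, measurable S ->
     Wu P1 M1 Complier true S / o1 P1 M1 true - Wu P1 M1 Complier false S / o1 P1 M1 false =
     Wu P2 M2 Complier true S / o1 P2 M2 true - Wu P2 M2 Complier false S / o1 P2 M2 false) ->
  cace P1 M1 = cace P2 M2.
Proof.
move=> G1 G2 HO HS; apply: frame_base => // S mS.
rewrite (Diff' G1 mS) (Diff' G2 mS).
have := CzRD' G1 true mS; have := CzRD' G1 false mS; have := CzRD' G2 true mS; have := CzRD' G2 false mS.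
move=> /= -> -> -> ->; exact: HS.
Qed.

Lemma thmZD {R : realType} : cace_identifiable (R := R) (fun d T P M =>
    iv_assumptions P M /\ rd_assumptions P M /\ case_ZD P M).
Proof.
move=> d1 T1 P1 M1 d2 T2 P2 M2 [I1 [R1 C1]] [I2 [R2 C2]] HO.
have G1 : iv_assumptions P1 M1 /\ rd_assumptions P1 M1 by [].
have G2 : iv_assumptions P2 M2 /\ rd_assumptions P2 M2 by [].
apply: frameZ => // S mS.
rewrite !(ZD_formula' G1 C1) // !(ZD_formula' G2 C2) //.
by rewrite !(o1_eq HO) !(o2_eq HO) !(o3_eq HO) //.
Qed.

Lemma thmUD {R : realType} : cace_identifiable (R := R) (fun d T P M =>
    iv_assumptions P M /\ rd_assumptions P M /\ case_UD P M).
Proof.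
move=> d1 T1 P1 M1 d2 T2 P2 M2 [I1 [R1 C1]] [I2 [R2 C2]] HO.
have G1 : iv_assumptions P1 M1 /\ rd_assumptions P1 M1 by [].
have G2 : iv_assumptions P2 M2 /\ rd_assumptions P2 M2 by [].
apply: frameC => // S mS.
rewrite !(UD_formula' G1 C1) // !(UD_formula' G2 C2) //.
by rewrite !(o1_eq HO) !(o2_eq HO) !(o3_eq HO) //.
Qed.

Lemma thmDY {R : realType} : cace_identifiable (R := R) (fun d T P M =>
    iv_assumptions P M /\ rd_assumptions P M /\ case_DY P M).
Proof.
move=> d1 T1 P1 M1 d2 T2 P2 M2 [I1 [R1 C1]] [I2 [R2 C2]] HO.
have G1 : iv_assumptions P1 M1 /\ rd_assumptions P1 M1 by [].
have G2 : iv_assumptions P2 M2 /\ rd_assumptions P2 M2 by [].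
apply: frameZ => // S mS.
rewrite !(DY_target' G1 C1) // !(DY_target' G2 C2) //.
by rewrite /dyterm !(o1_eq HO) !(o2_eq HO) !(o3_eq HO _ _ (measurable_set1 _)).
Qed.

Lemma thmZY {R : realType} : cace_identifiable (R := R) (fun d T P M =>
    iv_assumptions P M /\ rd_assumptions P M /\ case_ZY P M).
Proof.
move=> d1 T1 P1 M1 d2 T2 P2 M2 [I1 [R1 C1]] [I2 [R2 C2]] HO.
have G1 : iv_assumptions P1 M1 /\ rd_assumptions P1 M1 by [].
have G2 : iv_assumptions P2 M2 /\ rd_assumptions P2 M2 by [].
apply: frameZ => // S mS.
rewrite !(ZY_target' G1 C1) // !(ZY_target' G2 C2) //.
by rewrite /zyterm !(o1_eq HO) !(o2_eq HO) !(o3_eq HO _ _ (measurable_set1 _)).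
Qed.

Lemma thmUY {R : realType} : cace_identifiable (R := R) (fun d T P M =>
    iv_assumptions P M /\ rd_assumptions P M /\ case_UY P M).
Proof.
move=> d1 T1 P1 M1 d2 T2 P2 M2 [I1 [R1 C1]] [I2 [R2 C2]] HO.
have G1 : iv_assumptions P1 M1 /\ rd_assumptions P1 M1 by [].
have G2 : iv_assumptions P2 M2 /\ rd_assumptions P2 M2 by [].
apply: frameC => // S mS.
rewrite (UY_delta' G1 C1) // (UY_delta' G2 C2) //; congr (_ * _).
by rewrite /uyX /Aterm /pcO !(o1_eq HO) !(o2_eq HO) !(o3_eq HO _ _ (measurable_set1 _)).
Qed.

Theorem theorem6 (R : realType) :
  (* (1ZD + 2Z) *)
  cace_identifiable (R := R) (fun d T P M =>
    iv_assumptions P M /\ rd_assumptions P M /\ case_ZD P M) /\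
  (* (1UD + 2Z) *)
  cace_identifiable (R := R) (fun d T P M =>
    iv_assumptions P M /\ rd_assumptions P M /\ case_UD P M) /\
  (* (1UY + 2Z) *)
  cace_identifiable (R := R) (fun d T P M =>
    iv_assumptions P M /\ rd_assumptions P M /\ case_UY P M) /\
  (* (1DY + 2Z) *)
  cace_identifiable (R := R) (fun d T P M =>
    iv_assumptions P M /\ rd_assumptions P M /\ case_DY P M) /\
  (* (1ZY + 2Z) *)
  cace_identifiable (R := R) (fun d T P M =>
    iv_assumptions P M /\ rd_assumptions P M /\ case_ZY P M).
Proof.
split; first exact: thmZD.
split; first exact: thmUD.
split; first exact: thmUY.
split; first exact: thmDY.
exact: thmZY.
Qed.
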